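(* Let $\mathrm{GL}_3(\mathbb R)$ act by conjugation on $\mathfrak{sl}_3(\mathbb R)$ and let $\mathfrak s_{\mathbb R}:=\left\{A=\begin{pmatrix} a&1&0\\ b&a&c\\ d&0&-2a\end{pmatrix}: a,b,c,d\in\mathbb R\right\}$ (so $a=A_{11},b=A_{21},c=A_{23},d=A_{31}$). Then the $C^\infty(\mathfrak s_{\mathbb R})$-module of vector fields on $\mathfrak s_{\mathbb R}$ strongly tangential to this action is generated by the four vector fields $v_1=c\,\partial_c-d\,\partial_d$, $v_2=-a\,v_1$, $v_3=\tfrac d2\partial_a-3ad\,\partial_b+(9a^2-b)\partial_c$, $v_4=-\tfrac c2\partial_a+3ac\,\partial_b+(b-9a^2)\partial_d$.
   Context: Strongly tangential vector fields: let a Lie group $G$ with Lie algebra $\mathfrak g$ act on a manifold $X$ and let $S\subset X$ be a locally closed submanifold. For a smooth map $\varphi:S\to\mathfrak g$ define $\alpha_\varphi(s):=d_e(a_s)(\varphi(s))\in T_sX$, where $a_s:G\to X$, $g\mapsto gs$ (here $a_s(g)=gsg^{-1}$, so $\alpha_\varphi(s)=[\varphi(s),s]$). If $\alpha_\varphi(s)\in T_sS$ for all $s\in S$, the vector field $\alpha_\varphi$ on $S$ is called strongly tangential to the action of $G$. *)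

(* Defs.v *)
From Stdlib Require Import Reals.
Open Scope R_scope.

(* Points of s_R, identified with R^4 via the coordinates (a,b,c,d).
   The same type is used for tangent vectors (components along
   d/da, d/db, d/dc, d/dd). *)
Record P := mkP { pa : R; pb : R; pc : R; pd : R }.

Inductive idx := Ia | Ib | Ic | Id.

Definition coord (i : idx) (p : P) : R :=
  match i with Ia => pa p | Ib => pb p | Ic => pc p | Id => pd p end.

Definition upd (i : idx) (p : P) (t : R) : P :=
  match i with
  | Ia => mkP t (pb p) (pc p) (pd p)
  | Ib => mkP (pa p) t (pc p) (pd p)
  | Ic => mkP (pa p) (pb p) t (pd p)
  | Id => mkP (pa p) (pb p) (pc p) t
  end.

Definition cont4 (f : P -> R) : Prop :=
  forall p eps, 0 < eps -> exists delta, 0 < delta /\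
    forall q, (forall i, Rabs (coord i q - coord i p) < delta) ->
      Rabs (f q - f p) < eps.

Definition partial (i : idx) (f g : P -> R) : Prop :=
  forall p, derivable_pt_lim (fun t => f (upd i p t)) (coord i p) (g p).

Fixpoint Ck (k : nat) (f : P -> R) : Prop :=
  match k with
  | O => cont4 f
  | S k' => cont4 f /\ forall i, exists g, partial i f g /\ Ck k' g
  end.

Definition smooth (f : P -> R) : Prop := forall k, Ck k f.

(* 3x3 real matrices, entries indexed by 0,1,2 *)
Definition Mat3 := nat -> nat -> R.

Definition mmul (A B : Mat3) : Mat3 :=
  fun i j => A i 0%nat * B 0%nat j + A i 1%nat * B 1%nat j + A i 2%nat * B 2%nat j.

Definition mcomm (A B : Mat3) : Mat3 := fun i j => mmul A B i j - mmul B A i j.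

Definition mat3eq (A B : Mat3) : Prop :=
  forall i j, (i < 3)%nat -> (j < 3)%nat -> A i j = B i j.

Definition smat (p : P) : Mat3 := fun i j =>
  match i, j with
  | O, O => pa p | O, 1%nat => 1 | O, 2%nat => 0
  | 1%nat, O => pb p | 1%nat, 1%nat => pa p | 1%nat, 2%nat => pc p
  | 2%nat, O => pd p | 2%nat, 1%nat => 0 | 2%nat, 2%nat => -2 * pa p
  | _, _ => 0
  end.

Definition tmat (v : P) : Mat3 := fun i j =>
  match i, j with
  | O, O => pa v | 1%nat, 1%nat => pa v | 2%nat, 2%nat => -2 * pa v
  | 1%nat, O => pb v | 1%nat, 2%nat => pc v | 2%nat, O => pd v
  | _, _ => 0
  end.

(* X : s_R -> T s_R is strongly tangential to the conjugation action of
   GL_3(R): X = alpha_phi for a smooth phi : s_R -> gl_3(R), where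
   alpha_phi(s) = [phi(s), s] (which must lie in T_s s_R). *)
Definition strongly_tangential (X : P -> P) : Prop :=
  exists phi : P -> Mat3,
    (forall i j, (i < 3)%nat -> (j < 3)%nat -> smooth (fun p => phi p i j)) /\
    forall p, mat3eq (mcomm (phi p) (smat p)) (tmat (X p)).

Definition v1 (p : P) : P := mkP 0 0 (pc p) (- pd p).
Definition v2 (p : P) : P := mkP 0 0 (- pa p * pc p) (pa p * pd p).
Definition v3 (p : P) : P :=
  mkP (pd p / 2) (-3 * pa p * pd p) (9 * pa p ^ 2 - pb p) 0.
Definition v4 (p : P) : P :=
  mkP (- pc p / 2) (3 * pa p * pc p) 0 (pb p - 9 * pa p ^ 2).

Definition comb4 (f1 f2 f3 f4 : P -> R) (p : P) : P :=
  mkP (f1 p * pa (v1 p) + f2 p * pa (v2 p) + f3 p * pa (v3 p) + f4 p * pa (v4 p))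
      (f1 p * pb (v1 p) + f2 p * pb (v2 p) + f3 p * pb (v3 p) + f4 p * pb (v4 p))
      (f1 p * pc (v1 p) + f2 p * pc (v2 p) + f3 p * pc (v3 p) + f4 p * pc (v4 p))
      (f1 p * pd (v1 p) + f2 p * pd (v2 p) + f3 p * pd (v3 p) + f4 p * pd (v4 p)).

(* Main.v *)
Require Import Defs.
From Stdlib Require Import Reals Lra Lia Psatz.
Open Scope R_scope.

Lemma cont4_const r : cont4 (fun _ => r).
Proof. intros p eps He. exists 1; split; [lra|]. intros q _. unfold Rminus. rewrite Rplus_opp_r, Rabs_R0. lra. Qed.

Lemma cont4_coord j : cont4 (fun p => coord j p).
Proof. intros p eps He. exists eps; split; [lra|]. intros q Hq. apply Hq. Qed.

Lemma cont4_plus f g : cont4 f -> cont4 g -> cont4 (fun p => f p + g p).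
Proof.
  intros Hf Hg p eps He.
  destruct (Hf p (eps/2)) as [d1 [Hd1 H1]]; [lra|].
  destruct (Hg p (eps/2)) as [d2 [Hd2 H2]]; [lra|].
  exists (Rmin d1 d2); split; [apply Rmin_pos; lra|].
  intros q Hq.
  assert (A1 : Rabs (f q - f p) < eps/2).
  { apply H1; intro i; eapply Rlt_le_trans; [apply Hq|apply Rmin_l]. }
  assert (A2 : Rabs (g q - g p) < eps/2).
  { apply H2; intro i; eapply Rlt_le_trans; [apply Hq|apply Rmin_r]. }
  replace (f q + g q - (f p + g p)) with ((f q - f p) + (g q - g p)) by ring.
  eapply Rle_lt_trans; [apply Rabs_triang|]. lra.
Qed.

Lemma cont4_mult f g : cont4 f -> cont4 g -> cont4 (fun p => f p * g p).
Proof.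
  intros Hf Hg p eps He.
  set (A := Rabs (f p)). set (B := Rabs (g p)).
  assert (HA : 0 <= A) by apply Rabs_pos.
  assert (HB : 0 <= B) by apply Rabs_pos.
  destruct (Hf p (eps / (2*(B+1)))) as [d1 [Hd1 H1]].
  { apply Rdiv_lt_0_compat; lra. }
  destruct (Hg p (Rmin 1 (eps / (2*(A+1))))) as [d2 [Hd2 H2]].
  { apply Rmin_pos; [lra|apply Rdiv_lt_0_compat; lra]. }
  exists (Rmin d1 d2); split; [apply Rmin_pos; lra|].
  intros q Hq.
  assert (A1 : Rabs (f q - f p) < eps / (2*(B+1))).
  { apply H1; intro i; eapply Rlt_le_trans; [apply Hq|apply Rmin_l]. }
  assert (A2 : Rabs (g q - g p) < Rmin 1 (eps / (2*(A+1)))).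
  { apply H2; intro i; eapply Rlt_le_trans; [apply Hq|apply Rmin_r]. }
  assert (A3 : Rabs (g q - g p) < 1) by (eapply Rlt_le_trans; [apply A2|apply Rmin_l]).
  assert (A4 : Rabs (g q - g p) <= eps / (2*(A+1))) by (left; eapply Rlt_le_trans; [apply A2|apply Rmin_r]).
  assert (Hgq : Rabs (g q) < B + 1).
  { replace (g q) with ((g q - g p) + g p) by ring.
    eapply Rle_lt_trans; [apply Rabs_triang|]. unfold B. lra. }
  assert (E1 : eps / (2*(B+1)) * (B+1) = eps/2) by (field; lra).
  assert (E2 : A * (eps / (2*(A+1))) <= eps/2).
  { replace (A * (eps / (2*(A+1)))) with (eps/2 * (A/(A+1))) by (field; lra).
    assert (A/(A+1) <= 1). { apply Rmult_le_reg_r with (A+1); [lra|].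
      replace (A/(A+1)*(A+1)) with A by (field; lra). lra. }
    nra. }
  replace (f q * g q - f p * g p) with ((f q - f p) * g q + f p * (g q - g p)) by ring.
  eapply Rle_lt_trans; [apply Rabs_triang|]. rewrite !Rabs_mult.
  fold A.
  assert (P1 : Rabs (f q - f p) * Rabs (g q) < eps/2).
  { rewrite <- E1. apply Rmult_le_0_lt_compat; try apply Rabs_pos; assumption. }
  assert (P2 : A * Rabs (g q - g p) <= eps/2).
  { eapply Rle_trans; [|apply E2]. apply Rmult_le_compat_l; assumption. }
  lra.
Qed.

Lemma upd_coord i p : upd i p (coord i p) = p.
Proof. destruct i, p; reflexivity. Qed.

Lemma partial_plus i f g f' g' : partial i f f' -> partial i g g' ->
  partial i (fun p => f p + g p) (fun p => f' p + g' p).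
Proof. intros Hf Hg p. apply (derivable_pt_lim_plus (fun t => f (upd i p t)) (fun t => g (upd i p t))); auto. Qed.

Lemma partial_mult i f g f' g' : partial i f f' -> partial i g g' ->
  partial i (fun p => f p * g p) (fun p => f' p * g p + f p * g' p).
Proof.
  intros Hf Hg p.
  pose proof (derivable_pt_lim_mult (fun t => f (upd i p t)) (fun t => g (upd i p t)) _ _ _ (Hf p) (Hg p)) as H.
  unfold mult_fct in H. rewrite upd_coord in H. exact H.
Qed.

Lemma partial_const i r : partial i (fun _ => r) (fun _ => 0).
Proof. intro p. apply derivable_pt_lim_const. Qed.

Lemma Ck_mono k f : Ck (S k) f -> Ck k f.
Proof.
  revert f; induction k as [|k IH]; intros f H.
  - exact (proj1 H).
  - destruct H as [Hc Hd]. split; [exact Hc|].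
    intro i; destruct (Hd i) as [g [Hp Hg]]. exists g; split; auto.
Qed.

Lemma Ck_cont k f : Ck k f -> cont4 f.
Proof. destruct k; simpl; tauto. Qed.

Lemma Ck_const k r : Ck k (fun _ => r).
Proof.
  revert r; induction k; intro r; simpl.
  - apply cont4_const.
  - split; [apply cont4_const|]. intro i. exists (fun _ => 0). split; auto. apply partial_const.
Qed.

Lemma Ck_plus k : forall f g, Ck k f -> Ck k g -> Ck k (fun p => f p + g p).
Proof.
  induction k as [|k IH]; intros f g Hf Hg.
  - apply cont4_plus; assumption.
  - destruct Hf as [Hfc Hfd], Hg as [Hgc Hgd]. split; [apply cont4_plus; auto|].
    intro i. destruct (Hfd i) as [f' [Hf1 Hf2]], (Hgd i) as [g' [Hg1 Hg2]].
    exists (fun p => f' p + g' p). split; [apply partial_plus; auto|]. apply IH; auto.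
Qed.

Lemma Ck_mult k : forall f g, Ck k f -> Ck k g -> Ck k (fun p => f p * g p).
Proof.
  induction k as [|k IH]; intros f g Hf Hg.
  - apply cont4_mult; assumption.
  - pose proof (Ck_mono _ _ Hf) as Hf0. pose proof (Ck_mono _ _ Hg) as Hg0.
    destruct Hf as [Hfc Hfd], Hg as [Hgc Hgd]. split; [apply cont4_mult; auto|].
    intro i. destruct (Hfd i) as [f' [Hf1 Hf2]], (Hgd i) as [g' [Hg1 Hg2]].
    exists (fun p => f' p * g p + f p * g' p). split; [apply partial_mult; auto|].
    apply (Ck_plus k (fun p => f' p * g p) (fun p => f p * g' p)); apply IH; auto.
Qed.

Definition idx_eq_dec (i j : idx) : {i = j} + {i <> j}.
Proof. decide equality. Defined.

Lemma Ck_coord k j : Ck k (fun p => coord j p).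
Proof.
  destruct k; simpl; [apply cont4_coord|]. split; [apply cont4_coord|].
  intro i. destruct (idx_eq_dec i j) as [->|Hne].
  - exists (fun _ => 1). split; [|apply Ck_const].
    intro p. destruct j, p; simpl; apply derivable_pt_lim_id.
  - exists (fun _ => 0). split; [|apply Ck_const].
    intro p. destruct i, j; try congruence; destruct p; simpl; apply derivable_pt_lim_const.
Qed.

Definition smooth_of_Ck f (H : forall k, Ck k f) : smooth f := H.
Lemma sm_plus f g : smooth f -> smooth g -> smooth (fun p => f p + g p).
Proof. intros Hf Hg k. apply Ck_plus; auto. Qed.
Lemma sm_mult f g : smooth f -> smooth g -> smooth (fun p => f p * g p).
Proof. intros Hf Hg k. apply Ck_mult; auto. Qed.
Lemma sm_const r : smooth (fun _ => r).
Proof. intro k; apply Ck_const. Qed.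
Lemma sm_pa : smooth (fun p => pa p). Proof. intro k; exact (Ck_coord k Ia). Qed.
Lemma sm_pb : smooth (fun p => pb p). Proof. intro k; exact (Ck_coord k Ib). Qed.
Lemma sm_pc : smooth (fun p => pc p). Proof. intro k; exact (Ck_coord k Ic). Qed.
Lemma sm_pd : smooth (fun p => pd p). Proof. intro k; exact (Ck_coord k Id). Qed.

Ltac smt := repeat first [ assumption | apply sm_plus | apply sm_mult | apply sm_const
  | apply sm_pa | apply sm_pb | apply sm_pc | apply sm_pd ].

Definition phiF (f1 f2 f3 f4 : P -> R) (p : P) : Mat3 := fun i j =>
  match i, j with
  | O, 1%nat => (1/3) * f2 p
  | O, 2%nat => f3 p
  | 1%nat, O => pb p * ((1/3) * f2 p) + (1/2) * (pc p * f4 p) + (1/2) * (pd p * f3 p)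
  | 1%nat, 2%nat => pc p * ((1/3) * f2 p) + (-3) * (pa p * f3 p)
  | 2%nat, O => pd p * ((1/3) * f2 p) + (-3) * (pa p * f4 p)
  | 2%nat, 1%nat => f4 p
  | 2%nat, 2%nat => (-1) * f1 p
  | _, _ => 0
  end.

Theorem lemma7p4 : forall X : P -> P,
  strongly_tangential X <->
  exists f1 f2 f3 f4 : P -> R,
    smooth f1 /\ smooth f2 /\ smooth f3 /\ smooth f4 /\
    forall p, X p = comb4 f1 f2 f3 f4 p.
Proof.
  intro X; split.
  - intros [phi [Hs H]].
    exists (fun p => phi p 0%nat 0%nat + (-1) * phi p 2%nat 2%nat),
           (fun p => 3 * phi p 0%nat 1%nat), (fun p => phi p 0%nat 2%nat),
           (fun p => phi p 2%nat 1%nat).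
    assert (S : forall i j, (i < 3)%nat -> (j < 3)%nat -> smooth (fun p => phi p i j)) by exact Hs.
    repeat split; try (smt; apply S; lia).
    intro p.
    pose proof (H p 0%nat 0%nat ltac:(lia) ltac:(lia)) as E00.
    pose proof (H p 0%nat 1%nat ltac:(lia) ltac:(lia)) as E01.
    pose proof (H p 0%nat 2%nat ltac:(lia) ltac:(lia)) as E02.
    pose proof (H p 1%nat 0%nat ltac:(lia) ltac:(lia)) as E10.
    pose proof (H p 1%nat 1%nat ltac:(lia) ltac:(lia)) as E11.
    pose proof (H p 1%nat 2%nat ltac:(lia) ltac:(lia)) as E12.
    pose proof (H p 2%nat 0%nat ltac:(lia) ltac:(lia)) as E20.
    pose proof (H p 2%nat 1%nat ltac:(lia) ltac:(lia)) as E21.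
    pose proof (H p 2%nat 2%nat ltac:(lia) ltac:(lia)) as E22.
    unfold mcomm, mmul, smat, tmat in *; simpl in *.
    unfold comb4, v1, v2, v3, v4; simpl.
    destruct (X p) as [xa xb xc xd]; simpl in *.
    destruct p as [a b c d]; simpl in *.
    set (y00 := phi _ 0%nat 0%nat) in *.
    set (y01 := phi _ 0%nat 1%nat) in *.
    set (y02 := phi _ 0%nat 2%nat) in *.
    set (y10 := phi _ 1%nat 0%nat) in *.
    set (y11 := phi _ 1%nat 1%nat) in *.
    set (y12 := phi _ 1%nat 2%nat) in *.
    set (y20 := phi _ 2%nat 0%nat) in *.
    set (y21 := phi _ 2%nat 1%nat) in *.
    set (y22 := phi _ 2%nat 2%nat) in *.
    assert (H11 : y11 = y00) by lra.
    assert (H12 : y12 = c * y01 - 3 * a * y02) by lra.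
    assert (H20 : y20 = d * y01 - 3 * a * y21) by lra.
    assert (H10 : y10 = b * y01 + (c * y21 + d * y02) / 2) by lra.
    rewrite H11, H12, H20, H10 in *.
    f_equal; lra.
  - intros [f1 [f2 [f3 [f4 [H1 [H2 [H3 [H4 H]]]]]]]].
    exists (phiF f1 f2 f3 f4). split.
    + intros i j Hi Hj.
      destruct i as [|[|[|i]]]; try lia; destruct j as [|[|[|j]]]; try lia;
        unfold phiF; smt.
    + intros p i j Hi Hj. rewrite H.
      destruct i as [|[|[|i]]]; try lia; destruct j as [|[|[|j]]]; try lia;
        unfold mcomm, mmul, smat, tmat, phiF, comb4, v1, v2, v3, v4; simpl; field.
Qed.
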